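(* Let $k\ge3$, $d$ a positive integer, $\alpha=d/k$, $\beta>0$, $\lambda\in(0,1)$, and let $\eta_0$ be a probability measure on $[0,1]$ with $\eta_0(\mathrm dx)=\eta_0(\mathrm d(1-x))$. For any literals $\underline{\mathtt L}_a\in\{0,1\}^k$, $0\le a\le d$, the quantity $$\mathcal P\big(\delta_{\eta_0},\lambda;(\underline{\mathtt L}_a)_{0\le a\le d}\big):=\lambda^{-1}\log\mathbb E'\Big(\sum_{x\in\{0,1\}}\prod_{a=1}^d u_{a,\underline{\mathtt L}_a}(x)\Big)^{\lambda}-(k-1)\alpha\lambda^{-1}\log\mathbb E'\big(u_{\underline{\mathtt L}_0}\big)^{\lambda}$$ does not depend on $(\underline{\mathtt L}_a)_{0\le a\le d}$. Consequently, its average over $(\underline{\mathtt L}_a)_{0\le a\le d}$ i.i.d. uniform on $\{0,1\}^k$ equals its value at $\underline{\mathtt L}_a\equiv\underline 0$.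
   Context: Identify a probability measure $\rho$ on $\{0,1\}$ with $\rho(1)\in[0,1]$. Let $(\rho_{a,j})_{a\ge0,j\ge1}$ be i.i.d. samples from $\eta_0$, and $\mathbb E'$ the expectation over them. For $\underline{\mathtt L}\in\{0,1\}^k$ and $\underline x\in\{0,1\}^k$, $\theta_{\underline{\mathtt L}}(\underline x)=(1-e^{-\beta})\big(\prod_{i=1}^k(\mathtt L_i\oplus x_i)+\prod_{i=1}^k(\mathtt L_i\oplus x_i\oplus1)\big)$. For $x\in\{0,1\}$: $u_{a,\underline{\mathtt L}}(x)=\sum_{\underline x\in\{0,1\}^k}\mathbb 1\{x_1=x\}(1-\theta_{\underline{\mathtt L}}(\underline x))\prod_{j=2}^k\rho_{a,j}(x_j)$ and $u_{\underline{\mathtt L}}=\sum_{\underline x\in\{0,1\}^k}(1-\theta_{\underline{\mathtt L}}(\underline x))\prod_{j=1}^k\rho_{0,j}(x_j)$. *)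

(* Defs.v *)
From HB Require Import structures.
From mathcomp Require Import all_boot all_order all_algebra.
From mathcomp Require Import all_classical all_reals all_analysis.
Set Implicit Arguments. Unset Strict Implicit. Unset Printing Implicit Defensive.
Import Order.TTheory GRing.Theory Num.Theory.
Local Open Scope ring_scope.

Section Defs.
Variable R : realType.

(* A probability measure rho on {0,1} identified with rho(1) = p in [0,1]. *)
Definition nae_rho (p : R) (b : bool) : R := if b then p else 1 - p.

Definition nae_theta (k : nat) (beta : R) (L x : {ffun 'I_k -> bool}) : R :=
  (1 - expR (- beta)) *
  ((\prod_(i < k) ((L i (+) x i : bool) : nat)%:R) +
   (\prod_(i < k) ((L i (+) x i (+) true : bool) : nat)%:R)).

(* u_{a,L}(x): the first coordinate (index 0 in 'I_k, index 1 in the paper)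
   is fixed to x; rho_{a,j} for the other j are the given reals in [0,1]. *)
Definition nae_ua (k : nat) (beta : R) (L : {ffun 'I_k -> bool})
    (rho_a : 'I_k -> R) (x : bool) : R :=
  \sum_(xs : {ffun 'I_k -> bool} | [forall j : 'I_k, (val j == 0%N) ==> (xs j == x)])
    (1 - nae_theta beta L xs) * \prod_(j < k | val j != 0%N) nae_rho (rho_a j) (xs j).

Definition nae_u0 (k : nat) (beta : R) (L : {ffun 'I_k -> bool})
    (rho_0 : 'I_k -> R) : R :=
  \sum_(xs : {ffun 'I_k -> bool})
    (1 - nae_theta beta L xs) * \prod_(j < k) nae_rho (rho_0 j) (xs j).

(* Expectation of F(r_0, ..., r_{n-1}) where r_0, ..., r_{n-1} are i.i.d.
   with law P: the iterated integral (= integral against the product measure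
   P^{\otimes n} for nonnegative measurable F, by Tonelli). *)
Fixpoint nae_iidE (P : probability R R) (n : nat) (F : (nat -> R) -> R) : \bar R :=
  match n with
  | 0%N => (F (fun _ => 0))%:E
  | n'.+1 => (\int[P]_x
       nae_iidE P n' (fun r => F (fun i => if i == n' then x else r i)))%E
  end.

Definition nae_smp (k : nat) (r : nat -> R) (a j : nat) : R := r (a * k + j)%N.

Definition nae_P (k d : nat) (beta lambda : R) (eta0 : probability R R)
    (L : 'I_d.+1 -> {ffun 'I_k -> bool}) : R :=
  let n := (d.+1 * k)%N in
  let alpha := (d%:R / k%:R : R) in
  lambda^-1 * ln (fine (nae_iidE eta0 n (fun r =>
      (\sum_(x : bool) \prod_(a < d.+1 | val a != 0%N)
          nae_ua beta (L a) (fun j : 'I_k => nae_smp k r a j) x) `^ lambda)))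
  - (k%:R - 1) * alpha * lambda^-1 *
    ln (fine (nae_iidE eta0 n (fun r =>
      (nae_u0 beta (L ord0) (fun j : 'I_k => nae_smp k r 0 j)) `^ lambda))).

End Defs.
Arguments nae_P {R} k d beta lambda eta0 L.

(* Main.v *)
Require Import Defs.
From HB Require Import structures.
From mathcomp Require Import all_boot all_order all_algebra.
From mathcomp Require Import all_classical all_reals all_analysis.
From mathcomp Require Import measurable_realfun.
Set Implicit Arguments. Unset Strict Implicit. Unset Printing Implicit Defensive.
Import Order.TTheory GRing.Theory Num.Theory.
Import numFieldNormedType.Exports.
Local Open Scope classical_set_scope.
Local Open Scope ring_scope.

Section refl.
Variable R : realType.
Definition rphi (x : R) : R := 1 - x.
Lemma rphi_meas : measurable_fun setT rphi.
Proof. by apply: measurable_funB. Qed.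

Import HBSimple HBNNSimple.
Section comp.
Variable h : {nnsfun R >-> R}.
Definition hphi := h \o rphi.
Let m1 : measurable_fun setT hphi.
Proof. apply: measurableT_comp => //; exact: rphi_meas. Qed.
Let m2 : finite_set (range hphi).
Proof. apply: (sub_finite_set _ (fimfunP h)) => _ [x _ <-]; by exists (rphi x). Qed.
Let m3 : forall x, 0 <= hphi x. Proof. by move=> x; rewrite /hphi /=. Qed.
HB.instance Definition _ := isMeasurableFun.Build _ _ _ _ hphi m1.
HB.instance Definition _ := FiniteImage.Build _ _ hphi m2.
HB.instance Definition _ := isNonNegFun.Build _ _ hphi m3.
Definition hphi_nn : {nnsfun R >-> R} := hphi.
End comp.
Lemma hphiE (h : {nnsfun R >-> R}) x : hphi_nn h x = h (1 - x).
Proof. by []. Qed.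

Variable P : probability R R.
Hypothesis Psym : forall A : set R, measurable A -> P (rphi @^-1` A) = P A.

Local Open Scope ereal_scope.
Lemma nn_le (g : R -> \bar R) :
  ereal_sup [set sintegral P h | h in [set h : {nnsfun R >-> R} | forall x, (h x)%:E <= g x]]
  <= ereal_sup [set sintegral P h | h in [set h : {nnsfun R >-> R} | forall x, (h x)%:E <= (g \o rphi) x]].
Proof.
apply: ge_ereal_sup => _ [h hg <-]; apply: ereal_sup_ubound.
exists (hphi_nn h); first by move=> x; exact: hg.
rewrite /sintegral; apply: eq_fsbigr => r _; congr (_ * _).
idtac.
exact: (Psym (measurable_funPTI h (measurable_set1 r))).
Qed.

Lemma rphiK x : rphi (rphi x) = x.
Proof. by rewrite /rphi opprB addrC subrK. Qed.

Lemma integral_rphi (f : R -> \bar R) : \int[P]_x f x = \int[P]_x f (rphi x).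
Proof.
rewrite /integral !patch_setT -[f]/(fun x => f x).
have key : forall g : R -> \bar R,
  ereal_sup [set sintegral P h | h in [set h : {nnsfun R >-> R} | forall x, (h x)%:E <= g x]]
  = ereal_sup [set sintegral P h | h in [set h : {nnsfun R >-> R} | forall x, (h x)%:E <= g (rphi x)]].
  move=> g; apply/le_anti/andP; split; first exact: nn_le.
  have e : (g \o rphi) \o rphi = g by apply/funext => x /=; rewrite rphiK.
  by have := nn_le (g \o rphi); rewrite e.
have ep : (fun x0 => f (rphi x0))^\+ = (f^\+) \o rphi.
  by apply/funext => x; rewrite /= !funeposE.
have en : (fun x0 => f (rphi x0))^\- = (f^\-) \o rphi.
  by apply/funext => x; rewrite /= !funenegE.
by rewrite ep en -!key.
Qed.
End refl.
Arguments rphi {R}.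

Section flip.
Variable R : realType.
Variable P : probability R R.
Hypothesis Psym : forall A : set R, measurable A -> P (rphi @^-1` A) = P A.

Definition flipn (s : nat -> bool) (n : nat) (r : nat -> R) (i : nat) : R :=
  if s i && (i < n)%N then 1 - r i else r i.

Lemma iid_flip n s (F : (nat -> R) -> R) :
  nae_iidE P n F = nae_iidE P n (fun r => F (flipn s n r)).
Proof.
elim: n F => [|n IH] F /=.
  by congr (EFin (F _)); apply/funext => i; rewrite /flipn andbF.
transitivity (\int[P]_x nae_iidE P n
   (fun r => F (fun i => if i == n then (if s n then rphi x else x) else r i)))%E.
  case sn: (s n); last by [].
  rewrite (integral_rphi Psym); apply: eq_integral => x _.
  by rewrite rphiK.
apply: eq_integral => x _; rewrite (IH (fun r => F (fun i => if i == n then (if s n then rphi x else x) else r i))).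
congr nae_iidE; apply/funext => r; congr F; apply/funext => i.
rewrite /flipn; case: eqP => [->|/eqP ni].
  by rewrite ltnSn andbT; case: (s n).
by rewrite ltnS [(i <= n)%N]leq_eqVlt (negbTE ni).
Qed.

Lemma iid_flip' n s (F G : (nat -> R) -> R) :
  (forall r, F r = G (flipn s n r)) -> nae_iidE P n F = nae_iidE P n G.
Proof.
by move=> FG; rewrite (iid_flip n s G); congr nae_iidE; apply/funext.
Qed.
End flip.

Section alg.
Variable R : realType.
Variable k' : nat.
Local Notation k := k'.+1.
Variable beta : R.

Lemma theta_shift (L xs : {ffun 'I_k -> bool}) c :
  nae_theta beta L xs =
  nae_theta beta [ffun _ => false] [ffun i => L i (+) xs i (+) c].
Proof.
rewrite /nae_theta; congr (_ * _).
case: c.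
  rewrite addrC; congr (_ + _); apply: eq_bigr => i _; rewrite !ffunE /=.
    by rewrite addbT.
  by rewrite -addbA addbb addbF.
by congr (_ + _); apply: eq_bigr => i _; rewrite !ffunE /= addbF.
Qed.

Lemma rho_flip (p : R) (b c : bool) :
  nae_rho (if c then 1 - p else p) (c (+) b) = nae_rho p b.
Proof. by case: c; case: b; rewrite /nae_rho //= subKr. Qed.

Lemma ua_flip (L : {ffun 'I_k -> bool}) (rho : 'I_k -> R) x :
  nae_ua beta L rho x =
  nae_ua beta [ffun _ => false]
    (fun j => if L j (+) L ord0 then 1 - rho j else rho j) x.
Proof.
rewrite /nae_ua.
pose h (xs : {ffun 'I_k -> bool}) := [ffun i => L i (+) xs i (+) L ord0].
have hK : involutive h.
  by move=> xs; apply/ffunP => i; rewrite !ffunE; case: (L i); case: (L ord0); case: (xs i).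
rewrite [RHS](reindex_inj (can_inj hK)) /=.
apply: eq_big => [xs|xs _].
  apply/forallP/forallP => H j; have := H j; apply: contraTT; rewrite !negb_imply;
    case/andP => j0 hj; rewrite j0 /=.
    have -> : j = ord0 by apply/val_inj; exact/eqP.
    move: hj; have -> : j = ord0 by apply/val_inj; exact/eqP.
    by rewrite ffunE addbC addbA addbb addFb.
  move: hj; have -> : j = ord0 by apply/val_inj; exact/eqP.
  by rewrite ffunE addbC addbA addbb addFb.
rewrite (theta_shift L xs (L ord0)); congr (_ * _).
apply: eq_bigr => j _; rewrite ffunE.
rewrite -(rho_flip (rho j) (xs j) (L j (+) L ord0)); congr nae_rho.
by case: (L j); case: (L ord0); case: (xs j).
Qed.

Lemma u0_flip (L : {ffun 'I_k -> bool}) (rho : 'I_k -> R) :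
  nae_u0 beta L rho =
  nae_u0 beta [ffun _ => false] (fun j => if L j then 1 - rho j else rho j).
Proof.
rewrite /nae_u0.
pose h (xs : {ffun 'I_k -> bool}) := [ffun i => L i (+) xs i (+) false].
have hK : involutive h.
  by move=> xs; apply/ffunP => i; rewrite !ffunE !addbF addbA addbb addFb.
rewrite [RHS](reindex_inj (can_inj hK)) /=.
apply: eq_bigr => xs _.
rewrite (theta_shift L xs false); congr (_ * _).
apply: eq_bigr => j _; rewrite ffunE addbF.
by rewrite rho_flip.
Qed.
End alg.

Section main.
Variable R : realType.
Variable P : probability R R.
Hypothesis Psym : forall A : set R, measurable A -> P (rphi @^-1` A) = P A.
Variables (k' d : nat) (beta lambda : R).
Local Notation k := k'.+1.

Lemma idx_lt (a : 'I_d.+1) (j : 'I_k) : (a * k + j < d.+1 * k)%N.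
Proof.
apply: (@leq_trans (a.+1 * k)); first by rewrite mulSnr ltn_add2l ltn_ord.
by rewrite leq_mul2r ltn_ord orbT.
Qed.

Lemma idx_div (a j : nat) : (j < k)%N -> ((a * k + j) %/ k = a)%N.
Proof. by move=> jk; rewrite divnMDl // divn_small // addn0. Qed.

Lemma idx_mod (a j : nat) : (j < k)%N -> ((a * k + j) %% k = j)%N.
Proof. by move=> jk; rewrite modnMDl modn_small. Qed.

Lemma P_const (L : 'I_d.+1 -> {ffun 'I_k -> bool}) :
  nae_P k d beta lambda P L = nae_P k d beta lambda P (fun _ => [ffun _ => false]).
Proof.
have E1 : nae_iidE P (d.+1 * k) (fun r : nat -> R =>
           (\sum_x \prod_(a < d.+1 | val a != 0%N)
                  nae_ua beta (L a) (fun j : 'I_k => nae_smp k r a j) x) `^ lambda)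
  = nae_iidE P (d.+1 * k) (fun r : nat -> R =>
           (\sum_x \prod_(a < d.+1 | val a != 0%N)
                  nae_ua beta [ffun=> false] (fun j : 'I_k => nae_smp k r a j) x) `^ lambda).
  pose s1 i := L (inord (i %/ k)) (inord (i %% k)) (+) L (inord (i %/ k)) ord0.
  apply: (iid_flip' Psym (s := s1)) => r.
  congr (_ `^ _); apply: eq_bigr => x _; apply: eq_bigr => a _.
  rewrite ua_flip; congr nae_ua; apply/funext => j.
  rewrite /nae_smp /flipn idx_lt andbT /s1 idx_div // idx_mod // !inord_val. reflexivity.
have E2 : nae_iidE P (d.+1 * k) (fun r : nat -> R =>
           nae_u0 beta (L ord0) (fun j : 'I_k => nae_smp k r 0 j) `^ lambda)
  = nae_iidE P (d.+1 * k) (fun r : nat -> R =>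
           nae_u0 beta [ffun=> false] (fun j : 'I_k => nae_smp k r 0 j) `^ lambda).
  pose s2 i := (i %/ k == 0)%N && L ord0 (inord (i %% k)).
  apply: (iid_flip' Psym (s := s2)) => r.
  apply: (congr1 (fun t => t `^ lambda)); rewrite [LHS]u0_flip.
  f_equal; apply/funext => j.
  rewrite /nae_smp /flipn. rewrite mul0n. rewrite add0n.
  have jlt : (j < d.+1 * k)%N by apply: (leq_trans (ltn_ord j)); rewrite leq_pmull.
  rewrite jlt andbT /s2 (divn_small (ltn_ord j)) (modn_small (ltn_ord j)) eqxx inord_val.
  reflexivity.
rewrite /nae_P.
exact: (f_equal2 (fun a b => lambda^-1 * ln (fine a) - (k%:R - 1) * (d%:R / k%:R) / lambda * ln (fine b)) E1 E2).
Qed.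
End main.

Theorem lemma2p3 (R : realType) (k d : nat) (beta lambda : R)
    (eta0 : probability R R) :
  (3 <= k)%N -> (0 < d)%N -> 0 < beta -> 0 < lambda < 1 ->
  eta0 `[0, 1]%classic = 1%E ->
  (forall A : set R, measurable A ->
     eta0 ((fun x : R => 1 - x) @^-1` A) = eta0 A) ->
  (forall L L' : 'I_d.+1 -> {ffun 'I_k -> bool},
     nae_P k d beta lambda eta0 L = nae_P k d beta lambda eta0 L') /\
  (2 ^+ (k * d.+1))^-1 *
    \sum_(L : {ffun 'I_d.+1 -> {ffun 'I_k -> bool}}) nae_P k d beta lambda eta0 L
  = nae_P k d beta lambda eta0 (fun _ => [ffun _ => false]).
Proof.
case: k => [//|k'] _ _ _ _ _ Psym.
have C := P_const Psym (k' := k') (d := d) beta lambda.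
split; first by move=> L L'; rewrite C (C L').
rewrite (eq_bigr (fun _ => nae_P k'.+1 d beta lambda eta0 (fun _ => [ffun _ => false]))); last by move=> L _; exact: C.
rewrite sumr_const card_ffun card_ffun card_bool !card_ord -expnM -[X in _ * X]mulr_natl natrX mulrA mulVf ?mul1r //.
Qed.
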